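(* Let $g(x)=\sin(x)^2$. For positive integers $m,n$, let $p=\gcd(m,n)$, $\mu=\pi/n$ and $\tilde{G}(m,n)=\frac{1}{\pi}\int_{-\pi/2}^{\pi/2}\prod_{i=0}^{n-1} g(x+mi\mu)\,dx$. Then $$\tilde{G}(m,n)=\frac{2^{p}\,(2p-1)!!}{4^n\, p!}.$$
   Context: $(2p-1)!!=1\cdot3\cdots(2p-1)$ denotes the double factorial. *)

(* Defs.v *)
From Stdlib Require Import Reals Lra Lia.
From Coquelicot Require Import Coquelicot.
Open Scope R_scope.

Fixpoint dfact_odd (p : nat) : nat :=
  match p with
  | O => 1%nat
  | S q => (dfact_odd q * (2 * q + 1))%nat
  end.

Definition g (x : R) : R := (sin x) ^ 2.

Fixpoint prod_upto (n : nat) (f : nat -> R) : R :=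
  match n with
  | O => 1
  | S k => prod_upto k f * f k
  end.

Definition Gtilde (m n : nat) : R :=
  let mu := PI / INR n in
  / PI * RInt (fun x => prod_upto n (fun i => g (x + INR m * INR i * mu)))
              (- (PI / 2)) (PI / 2).

(* Main.v *)
Require Import Defs.
From Stdlib Require Import Reals Arith Lra Lia ZArith Znumtheory.
From Coquelicot Require Import Coquelicot.
From HB Require structures.
From mathcomp Require all_boot all_order all_algebra.
From mathcomp Require Rstruct complex.
Open Scope R_scope.

Definition four : R := 4.
Definition dbl (y : R) : R := 2 * y.
Definition ndbl (y : R) : R := - (2 * y).

Lemma four_g_re y :
  (1 + - cos (dbl y)) * (1 + - cos (ndbl y)) - (0 + - sin (dbl y)) * (0 + - sin (ndbl y))
  = four * g y.
Proof.
unfold dbl, ndbl, g, four. rewrite cos_neg, sin_neg, cos_2a_sin, sin_2a.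
pose proof (sin2_cos2 y) as H. unfold Rsqr in H.
transitivity (4*sin y^2 * (sin y * sin y + cos y * cos y)); [ring | rewrite H; ring].
Qed.

Lemma four_g_im y :
  (1 + - cos (dbl y)) * (0 + - sin (ndbl y)) + (0 + - sin (dbl y)) * (1 + - cos (ndbl y)) = 0.
Proof.
unfold dbl, ndbl. rewrite cos_neg, sin_neg. ring.
Qed.


Definition tt (m' N : nat) : R := 2 * PI * INR m' / INR N.

Lemma cos_eq1 th : cos th = 1 -> exists K : Z, th = IZR K * (2 * PI).
Proof.
intro H. rewrite <- (Rmult_1_l th) in H.
replace (1 * th) with (2 * (th / 2)) in H by field.
rewrite cos_2a_sin in H.
assert (Hs : sin (th / 2) = 0) by nra.
destruct (sin_eq_0_0 _ Hs) as [K HK]. exists K. lra.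
Qed.

Lemma nodiv (k m' N : nat) (K : Z) : Nat.gcd m' N = 1%nat -> (0 < k < N)%nat ->
  INR k * tt m' N = IZR K * (2 * PI) -> False.
Proof.
intros Hg Hk H. unfold tt in H.
assert (HN : INR N <> 0) by (apply not_0_INR; lia).
assert (HP := PI_RGT_0).
assert (H2 : INR k * INR m' = IZR K * INR N).
{ apply (Rmult_eq_reg_l (2 * PI / INR N)). 2: { apply Rmult_integral_contrapositive; split; [lra|]. apply Rinv_neq_0_compat; exact HN. }
  transitivity (INR k * (2 * PI * INR m' / INR N)). field. exact HN.
  rewrite H. field. exact HN. }
rewrite <- mult_INR in H2. rewrite !INR_IZR_INZ in H2. rewrite <- mult_IZR in H2.
apply eq_IZR in H2.
assert (Hd : Nat.divide N (m' * k)).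
{ exists (Z.to_nat K). assert (0 <= K)%Z by nia. apply Nat2Z.inj.
  rewrite !Nat2Z.inj_mul, Z2Nat.id by lia. lia. }
apply Nat.gauss in Hd. 2: { rewrite Nat.gcd_comm. exact Hg. }
apply Nat.divide_pos_le in Hd; lia.
Qed.

Lemma nodiv_neg (k m' N : nat) (K : Z) : Nat.gcd m' N = 1%nat -> (0 < k < N)%nat ->
  INR k * (- tt m' N) = IZR K * (2 * PI) -> False.
Proof.
intros Hg Hk H. apply (nodiv k m' N (- K)); auto. rewrite opp_IZR. lra.
Qed.

Lemma tt_period (m' N : nat) : (0 < N)%nat -> cos (INR N * tt m' N) = 1 /\ sin (INR N * tt m' N) = 0
  /\ cos (INR N * - tt m' N) = 1 /\ sin (INR N * - tt m' N) = 0.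
Proof.
intros HN. assert (HN' : INR N <> 0) by (apply not_0_INR; lia).
assert (E : INR N * tt m' N = 0 + 2 * INR m' * PI) by (unfold tt; field; exact HN').
assert (E' : INR N * - tt m' N = - (0 + 2 * INR m' * PI)) by (rewrite <- E; ring).
rewrite E', E, cos_neg, sin_neg, cos_period, sin_period, cos_0, sin_0. lra.
Qed.

Lemma aux1 (k : nat) t : t + INR k * t = (INR k + 1) * t.
Proof. ring. Qed.

Definition yj (m' N : nat) (x : R) (j : nat) : R := x + INR m' * INR j * (PI / INR N).

Lemma dbl_y m' N x j : (0 < N)%nat -> dbl (yj m' N x j) = dbl x + INR j * tt m' N.
Proof. intro HN. assert (INR N <> 0) by (apply not_0_INR; lia). unfold dbl, yj, tt. field. auto. Qed.

Lemma ndbl_y m' N x j : (0 < N)%nat -> ndbl (yj m' N x j) = ndbl x + INR j * (- tt m' N).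
Proof. intro HN. assert (INR N <> 0) by (apply not_0_INR; lia). unfold ndbl, yj, tt. field. auto. Qed.

Lemma dbl_N (N : nat) x : INR N * dbl x = dbl (INR N * x).
Proof. unfold dbl; ring. Qed.
Lemma ndbl_N (N : nat) x : INR N * ndbl x = ndbl (INR N * x).
Proof. unfold ndbl; ring. Qed.

Lemma hder (N q : nat) x : is_derive (fun x => sin (INR N * x)^(2*q+1) * cos (INR N * x)) x
  (INR N * (INR (2*q+1) * g (INR N * x)^q - INR (2*q+2) * g (INR N * x)^(q+1))).
Proof. auto_derive. easy.
replace (Init.Nat.pred (q + (q + 0) + 1)) with (2*q)%nat by lia.
replace (q + (q + 0) + 1)%nat with (S (2*q)) by lia.
replace (2*q+1)%nat with (S (2*q)) by lia.
replace (2*q+2)%nat with (S (S (2*q))) by lia.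
unfold g. rewrite <- !pow_mult. replace (2*(q+1))%nat with (S (S (2*q))) by lia.
set (s := sin (INR N * x)). set (c := cos (INR N * x)). set (k := (2*q)%nat).
assert (Hsc := sin2_cos2 (INR N * x)); unfold Rsqr in Hsc. fold s c in Hsc.
rewrite !S_INR. simpl pow.
replace (c * c) with (1 - s * s) by lra. 
transitivity (INR N * (INR k + 1) * s^k * (c * c) - INR N * s ^ k * (s * s)). ring.
replace (c * c) with (1 - s * s) by lra. ring.
Qed.

Lemma sin_NPI (N : nat) : sin (INR N * PI) = 0.
Proof.
induction N as [|N IH]. simpl. rewrite Rmult_0_l. apply sin_0.
rewrite S_INR, Rmult_plus_distr_r, Rmult_1_l, neg_sin, IH. ring.
Qed.

Lemma h_bound (N q : nat) b : (b = PI/2 \/ b = -(PI/2)) ->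
  sin (INR N * b)^(2*q+1) * cos (INR N * b) = 0.
Proof.
intros Hb.
assert (E : sin (INR N * b) * cos (INR N * b) = 0).
{ assert (sin (2 * (INR N * b)) = 0).
  { destruct Hb as [-> | ->].
    - replace (2 * (INR N * (PI/2))) with (INR N * PI) by field. apply sin_NPI.
    - replace (2 * (INR N * - (PI/2))) with (- (INR N * PI)) by field. rewrite sin_neg, sin_NPI. ring. }
  rewrite sin_2a in H. lra. }
replace (2*q+1)%nat with (S (2*q)) by lia. rewrite <- tech_pow_Rmult.
transitivity (sin (INR N * b) ^ (2*q) * (sin (INR N * b) * cos (INR N * b))). ring.
rewrite E. ring.
Qed.

Definition GG (N k : nat) (x : R) := g (INR N * x) ^ k.
Definition II (N k : nat) := RInt (GG N k) (-(PI/2)) (PI/2).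

Lemma GG_cont N k x : continuous (GG N k) x.
Proof. apply (ex_derive_continuous (V := R_NormedModule) (GG N k)). unfold GG, g. auto_derive. easy. Qed.

Lemma GG_int N k a b : ex_RInt (GG N k) a b.
Proof. apply (ex_RInt_continuous (V := R_CompleteNormedModule)). intros; apply GG_cont. Qed.

Lemma II_rec N q : (0 < N)%nat -> INR (2*q+2) * II N (S q) = INR (2*q+1) * II N q.
Proof.
intro HN. assert (HN' : INR N <> 0) by (apply not_0_INR; lia).
set (a := -(PI/2)). set (b := PI/2).
set (df := fun x => INR N * (INR (2*q+1) * GG N q x - INR (2*q+2) * GG N (q+1) x)).
assert (H : is_RInt df a b (minus (sin (INR N * b)^(2*q+1) * cos (INR N * b))
                                (sin (INR N * a)^(2*q+1) * cos (INR N * a)))).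
{ apply (is_RInt_derive (fun x => sin (INR N * x)^(2*q+1) * cos (INR N * x))).
  - intros x _. apply hder.
  - intros x _. apply (ex_derive_continuous (V := R_NormedModule) df). unfold df, GG, g. auto_derive. easy. }
rewrite (h_bound N q b), (h_bound N q a) in H by (unfold a, b; auto).
assert (H2 : is_RInt df a b (scal (INR N) (minus (scal (INR (2*q+1)) (II N q)) (scal (INR (2*q+2)) (II N (q+1)))))).
{ apply (is_RInt_scal (fun x => INR (2*q+1) * GG N q x - INR (2*q+2) * GG N (q+1) x)).
  apply (is_RInt_minus (fun x => INR (2*q+1) * GG N q x) (fun x => INR (2*q+2) * GG N (q+1) x)).
  - apply (is_RInt_scal (GG N q)). apply (RInt_correct (V := R_CompleteNormedModule)), GG_int.
  - apply (is_RInt_scal (GG N (q+1))). apply (RInt_correct (V := R_CompleteNormedModule)), GG_int. }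
apply (is_RInt_unique (V := R_CompleteNormedModule)) in H. apply (is_RInt_unique (V := R_CompleteNormedModule)) in H2. rewrite H in H2.
replace (q+1)%nat with (S q) in H2 by lia.
unfold scal, minus, plus, opp in H2; simpl in H2. unfold mult in H2; simpl in H2.
simpl Nat.mul. apply (Rmult_eq_reg_l (INR N)); [|exact HN']. lra.
Qed.

Lemma II_closed N p : (0 < N)%nat -> II N p = PI * INR (dfact_odd p) / (2 ^ p * INR (fact p)).
Proof.
intro HN. induction p as [|q IH].
- unfold II, GG. simpl pow. rewrite RInt_const. unfold scal; simpl. unfold mult; simpl. field.
- assert (Hr := II_rec N q HN). rewrite IH in Hr.
  assert (H2 : INR (2*q+2) <> 0) by (apply not_0_INR; lia).
  apply (Rmult_eq_reg_l (INR (2*q+2))); [|exact H2]. rewrite Hr.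
  simpl dfact_odd. rewrite fact_simpl. rewrite !mult_INR.
  replace (INR (2*q+2)) with (2 * INR (S q)) by (rewrite S_INR, plus_INR, mult_INR; simpl; ring).
  assert (INR (fact q) <> 0) by apply INR_fact_neq_0.
  assert (INR (S q) <> 0) by (apply not_0_INR; lia).
  assert (2 ^ q <> 0) by (apply pow_nonzero; lra).
  simpl pow. replace (q + (q+0) + 1)%nat with (2*q+1)%nat by lia. field. auto.
Qed.

Module Cx.
Import structures.
Import all_boot all_order all_algebra.
Import Rstruct complex.
Import Order.TTheory GRing.Theory Num.Theory.
Local Open Scope ring_scope.

Definition e (t : R) : R[i] := Complex (cos t) (sin t).

Lemma eD a b : e (a + b) = e a * e b.
Proof. rewrite /e /=. congr Complex; [rewrite cos_plus | rewrite sin_plus Rplus_comm]; reflexivity. Qed.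

Lemma four_g y : ((four * g y)%:C)%C = (1 - e (dbl y)) * (1 - e (ndbl y)).
Proof.
rewrite /e /=. apply/eqP; rewrite eq_complex /=; apply/andP; split; apply/eqP; symmetry; [exact: four_g_re | exact: four_g_im].
Qed.


Lemma e0 : e 0 = 1.
Proof. rewrite /e cos_0 sin_0. reflexivity. Qed.

Lemma eX t k : e t ^+ k = e (INR k * t).
Proof.
elim: k => [|k IH]; first by rewrite expr0 /= Rmult_0_l e0.
rewrite exprS IH -eD S_INR. congr e. exact: aux1.
Qed.

Lemma prim t N : (0 < N)%N -> cos (INR N * t) = 1%R -> sin (INR N * t) = 0%R ->
  (forall k, (0 < k < N)%N -> e (INR k * t) <> 1) -> N.-primitive_root (e t).
Proof.
move=> HN Hc Hs Hk. apply/andP; split => //. apply/forallP => i. apply/eqP.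
rewrite unity_rootE eX. case: (ltnP i.+1 N) => Hi.
  rewrite (ltn_eqF Hi). apply/eqP => H. by apply: (Hk i.+1) => //; rewrite Hi.
have -> : i.+1 = N by apply/eqP; rewrite eqn_leq Hi ltn_ord.
rewrite eqxx /e Hc Hs. by apply/eqP.
Qed.

Lemma exn x : e x * e (- x) = 1.
Proof. by rewrite -eD Rplus_opp_r e0. Qed.

Lemma prod_e N t x : N.-primitive_root (e t) ->
  \prod_(0 <= j < N) (1 - e (x + INR j * t)) = 1 - e (INR N * x).
Proof.
move=> pr.
have H : \prod_(0 <= j < N) (e (- x) - e t ^+ j) = e (- x) ^+ N - 1.
  have := congr1 (fun p => p.[e (- x)]) (factor_Xn_sub_1 pr).
  rewrite /= horner_prod hornerD hornerN hornerXn hornerC => <-.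
  by apply: eq_bigr => j _; rewrite hornerXsubC.
transitivity (\prod_(0 <= j < N) (e x * (e (- x) - e t ^+ j))).
  by apply: eq_bigr => j _; rewrite eD eX mulrBr exn.
rewrite big_split /= H prodr_const_nat subn0 mulrBr mulr1 -exprMn exn expr1n eX.
by [].
Qed.

Lemma prod_upto_big n f : prod_upto n f = \prod_(0 <= j < n) f j.
Proof.
elim: n => [|n IH]; first by rewrite big_geq.
by rewrite big_nat_recr //= IH.
Qed.

Lemma e_eq1 s : e s = 1 -> cos s = 1%R.
Proof. move=> H; have := congr1 (fun z : R[i] => let: Complex a _ := z in a) H; rewrite /= => ->; reflexivity. Qed.

Lemma key m' N x : Nat.gcd m' N = 1%N -> (0 < N)%N ->
  prod_upto N (fun j => four * g (yj m' N x j)) = four * g (INR N * x).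
Proof.
move=> Hg HN.
have HN' : (0 < N)%coq_nat by apply/ssrnat.ltP.
have [c1 [s1 [c2 s2]]] := tt_period m' N HN'.
have p1 : N.-primitive_root (e (tt m' N)).
  apply: prim => // k /andP[k1 k2] /e_eq1 /cos_eq1 [K HK].
  by apply: (nodiv k m' N K Hg) => //; split; apply/ssrnat.ltP.
have p2 : N.-primitive_root (e (- tt m' N)).
  apply: prim => // k /andP[k1 k2] /e_eq1 /cos_eq1 [K HK].
  by apply: (nodiv_neg k m' N K Hg) => //; split; apply/ssrnat.ltP.
apply: complexI.
rewrite prod_upto_big rmorph_prod.
transitivity (\prod_(0 <= j < N) ((1 - e (dbl x + INR j * tt m' N)) * (1 - e (ndbl x + INR j * (- tt m' N))))).
  apply: eq_bigr => j _. rewrite -dbl_y // -ndbl_y //. exact: four_g.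
rewrite big_split /= (prod_e _ _ _ p1) (prod_e _ _ _ p2) dbl_N ndbl_N four_g.
by [].
Qed.

Lemma key' m' N x : Nat.gcd m' N = 1%N -> (0 < N)%coq_nat ->
  prod_upto N (fun j => four * g (yj m' N x j)) = four * g (INR N * x).
Proof. move=> Hg HN. apply: key => //. exact/ssrnat.ltP. Qed.

End Cx.

Lemma prod_upto_add a b f : prod_upto (a + b) f = prod_upto a f * prod_upto b (fun i => f (a + i)%nat).
Proof.
induction b as [|b IH].
- rewrite Nat.add_0_r. simpl. ring.
- rewrite Nat.add_succ_r. simpl. rewrite IH. ring.
Qed.

Lemma prod_upto_ext n f f' : (forall i, f i = f' i) -> prod_upto n f = prod_upto n f'.
Proof. intro H. induction n as [|n IH]; simpl; [reflexivity | rewrite IH, H; reflexivity]. Qed.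

Lemma prod_upto_scal n c f : prod_upto n (fun i => c * f i) = c ^ n * prod_upto n f.
Proof. induction n as [|n IH]; simpl; [ring | rewrite IH; ring]. Qed.

Lemma prod_upto_periodic N k G : (forall i, G (N + i)%nat = G i) ->
  prod_upto (k * N) G = (prod_upto N G) ^ k.
Proof.
intro HG. induction k as [|k IH].
- reflexivity.
- simpl Nat.mul. rewrite prod_upto_add. rewrite (prod_upto_ext _ _ G HG), IH. simpl. ring.
Qed.

Lemma g_per y k : g (y + INR k * PI) = g y.
Proof.
induction k as [|k IH].
- simpl. rewrite Rmult_0_l, Rplus_0_r. reflexivity.
- rewrite S_INR. replace (y + (INR k + 1) * PI) with ((y + INR k * PI) + PI) by ring.
  unfold g in *. rewrite neg_sin. rewrite <- IH. ring.
Qed.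

Lemma yj_per m' N x i : (0 < N)%nat -> g (yj m' N x (N + i)) = g (yj m' N x i).
Proof.
intro HN. assert (INR N <> 0) by (apply not_0_INR; lia).
replace (yj m' N x (N + i)) with (yj m' N x i + INR m' * PI).
- apply g_per.
- unfold yj. rewrite plus_INR. field. auto.
Qed.

Lemma pointwise m n x : (0 < m)%nat -> (0 < n)%nat ->
  let p := Nat.gcd m n in
  prod_upto n (fun i => g (x + INR m * INR i * (PI / INR n))) =
  (/ four ^ (n / p - 1)) ^ p * GG (n / p) p x.
Proof.
intros Hm Hn p.
assert (Hp : (0 < p)%nat). { unfold p. destruct (Nat.gcd m n) eqn:E; [|lia]. apply Nat.gcd_eq_0 in E. lia. }
destruct (Nat.gcd_divide_l m n) as [m' Hm']. destruct (Nat.gcd_divide_r m n) as [N HN].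
fold p in Hm', HN.
assert (HNp : (n / p = N)%nat). { rewrite HN. apply Nat.div_mul. lia. }
rewrite HNp.
assert (HN0 : (0 < N)%nat). { destruct N; lia. }
assert (Hg : Nat.gcd m' N = 1%nat).
{ assert (E : Nat.gcd m n = (Nat.gcd m' N * p)%nat).
  { rewrite Hm', HN. apply Nat.gcd_mul_mono_r. }
  fold p in E. destruct (Nat.gcd m' N) as [|[|k]]; nia. }
assert (HpR : INR p <> 0) by (apply not_0_INR; lia).
assert (HNR : INR N <> 0) by (apply not_0_INR; lia).
rewrite (prod_upto_ext _ _ (fun i => g (yj m' N x i))).
2: { intro i. unfold yj. f_equal. rewrite Hm', HN, !mult_INR. field. auto. }
rewrite HN, Nat.mul_comm, prod_upto_periodic.
2: { intro i. apply yj_per. exact HN0. }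
assert (K : prod_upto N (fun j => four * g (yj m' N x j)) = four * g (INR N * x)) by exact (Cx.key' m' N x Hg HN0).
rewrite prod_upto_scal in K.
assert (Hf : four ^ N <> 0) by (apply pow_nonzero; unfold four; lra).
assert (E : prod_upto N (fun i => g (yj m' N x i)) = / four ^ (N - 1) * g (INR N * x)).
{ replace (four ^ N) with (four * four ^ (N - 1)) in K
    by (destruct N as [|N0]; [lia|]; rewrite Nat.sub_succ, Nat.sub_0_r; reflexivity).
  assert (four ^ (N - 1) <> 0) by (apply pow_nonzero; unfold four; lra).
  apply (Rmult_eq_reg_l (four * four ^ (N - 1))). 2: { unfold four in *; apply Rmult_integral_contrapositive; split; lra. }
  rewrite K, Rmult_assoc, <- (Rmult_assoc (four ^ (N - 1))), Rinv_r, Rmult_1_l; auto. }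
rewrite E. unfold GG. rewrite Rpow_mult_distr. reflexivity.
Qed.

Theorem lemma5p1 (m n : nat) (hm : (0 < m)%nat) (hn : (0 < n)%nat) :
  let p := Nat.gcd m n in
  Gtilde m n = 2 ^ p * INR (dfact_odd p) / (4 ^ n * INR (fact p)).
Proof.
intro p. unfold Gtilde.
rewrite (RInt_ext _ (fun x => scal ((/ four ^ (n / p - 1)) ^ p) (GG (n / p) p x))).
2: { intros x _. apply pointwise; auto. }
rewrite (RInt_scal (V := R_CompleteNormedModule)) by apply GG_int.
assert (Hp : (0 < p)%nat). { unfold p. destruct (Nat.gcd m n) eqn:E; [|lia]. apply Nat.gcd_eq_0 in E. lia. }
destruct (Nat.gcd_divide_r m n) as [N HN]. fold p in HN.
assert (HNp : (n / p = N)%nat). { rewrite HN. apply Nat.div_mul. lia. }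
rewrite HNp. assert (HN0 : (0 < N)%nat). { destruct N; lia. }
fold (II N p). rewrite (II_closed N p HN0).
unfold scal; simpl; unfold mult; simpl.
rewrite HN. destruct N as [|N0]; [lia|]. rewrite Nat.sub_succ, Nat.sub_0_r.
rewrite pow_mult.
replace four with (2 * 2) by (unfold four; ring). replace 4 with (2 * 2) by ring.
rewrite <- tech_pow_Rmult. rewrite !Rpow_mult_distr, pow_inv, !Rpow_mult_distr.
assert (HP := PI_RGT_0).
assert (INR (fact p) <> 0) by apply INR_fact_neq_0.
assert (2 ^ p <> 0) by (apply pow_nonzero; lra).
assert ((2 ^ N0) ^ p <> 0) by (apply pow_nonzero, pow_nonzero; lra).
field. repeat split; auto; lra.

Qed.
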